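(* Let $G=(V,E)$ be a finite unweighted undirected graph with no isolated nodes, let $g\ge 2$ be an integer and $Q\ge 1$. Suppose $S_1,\dots,S_Q\subset V$ are pairwise disjoint $g$-dangling sets, and let $S_0=V\setminus\bigcup_{l=1}^Q S_l$ satisfy $\mathrm{vol}(S_0,G)\ge 4g^2$. Then the normalized Laplacian $L=I-D^{-1/2}AD^{-1/2}$ of $G$ has at least $Q/2$ eigenvalues (counted with multiplicity) that are strictly smaller than $(g-1)^{-1}$.
   Context: $A$ is the adjacency matrix of $G$ ($A_{ij}=1$ if $\{i,j\}\in E$, else $0$), $d_i=\sum_j A_{ij}$ is the degree of node $i$, $D=\mathrm{diag}(d_1,\dots,d_N)$, and for $S\subset V$, $\mathrm{vol}(S,G)=\sum_{i\in S}d_i$. A subset $S\subset V$ is called $g$-dangling if: (i) $|S|=g$; (ii) the node-induced subgraph on $S$ has exactly $g-1$ edges and contains no cycle (i.e., it is a tree); (iii) there is exactly one edge of $G$ with one endpoint in $S$ and the other in $V\setminus S$. *)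

(* Defs.v *)
From HB Require Import structures.
From mathcomp Require Import all_boot all_order all_algebra.
Set Implicit Arguments. Unset Strict Implicit. Unset Printing Implicit Defensive.
Import Order.TTheory GRing.Theory Num.Theory.

Definition simple_graph (n : nat) (e : rel 'I_n) : Prop :=
  symmetric e /\ irreflexive e.

Definition no_isolated (n : nat) (e : rel 'I_n) : Prop :=
  forall i : 'I_n, exists j : 'I_n, e i j.

Definition deg (n : nat) (e : rel 'I_n) (i : 'I_n) : nat := #|[set j | e i j]|.

Definition vol (n : nat) (e : rel 'I_n) (S : {set 'I_n}) : nat :=
  \sum_(i in S) deg e i.

Definition induced_edges (n : nat) (e : rel 'I_n) (S : {set 'I_n}) : nat :=
  #|[set p : 'I_n * 'I_n | [&& p.1 \in S, p.2 \in S, (p.1 < p.2)%N & e p.1 p.2]]|.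

Definition induced_acyclic (n : nat) (e : rel 'I_n) (S : {set 'I_n}) : Prop :=
  forall c : seq 'I_n, {subset c <= S} -> uniq c -> (2 < size c)%N -> ~~ cycle e c.

Definition boundary_edges (n : nat) (e : rel 'I_n) (S : {set 'I_n}) : nat :=
  #|[set p : 'I_n * 'I_n | [&& p.1 \in S, p.2 \notin S & e p.1 p.2]]|.

Definition dangling (n : nat) (e : rel 'I_n) (g : nat) (S : {set 'I_n}) : Prop :=
  [/\ #|S| = g, induced_edges e S = g.-1, induced_acyclic e S
    & boundary_edges e S = 1%N].

Local Open Scope ring_scope.

Definition adjacency (R : nzRingType) (n : nat) (e : rel 'I_n) : 'M[R]_n :=
  \matrix_(i, j) (e i j)%:R.

Definition deg_inv_sqrt (R : rcfType) (n : nat) (e : rel 'I_n) : 'M[R]_n :=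
  diag_mx (\row_i (Num.sqrt (deg e i)%:R)^-1).

Definition norm_laplacian (R : rcfType) (n : nat) (e : rel 'I_n) : 'M[R]_n :=
  1%:M - deg_inv_sqrt R e *m adjacency R e *m deg_inv_sqrt R e.

(* Main.v *)
Require Import Defs.
From HB Require Import structures.
From mathcomp Require Import all_boot all_order all_algebra.
From mathcomp Require Import complex zify ring.
Import Order.TTheory GRing.Theory Num.Theory.
Local Open Scope ring_scope.

Lemma count_enum_card (T : finType) (a : pred T) : count a (enum T) = #|a|.
Proof.
rewrite cardE -size_filter /enum_mem.
rewrite [X in filter a X](@eq_filter _ _ predT) ?filter_predT //.

Qed.

Lemma char_poly_conj (F : fieldType) n (P D : 'M[F]_n) : P \in unitmx ->
  char_poly (invmx P *m D *m P) = char_poly D.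
Proof.
move=> Pu; rewrite /char_poly /char_poly_mx.
have -> : 'X%:M - map_mx polyC (invmx P *m D *m P) =
   map_mx polyC (invmx P) *m ('X%:M - map_mx polyC D) *m map_mx polyC P.
  rewrite mulmxBr mulmxBl !map_mxM; congr (_ - _).
  rewrite mul_mx_scalar -scalemxAl -map_mxM mulVmx // map_mx1.
  by rewrite scalemx1.
rewrite !det_mulmx mulrC mulrA -det_mulmx -map_mxM mulmxV // map_mx1 det1 mul1r.
by [].
Qed.

Section Main.
Variables (R : rcfType) (n : nat) (e : rel 'I_n) (g Q : nat) (S : 'I_Q -> {set 'I_n}).
Local Notation C := (R[i]).
Local Notation toC := (real_complex R).
Definition sq (i : 'I_n) : R := Num.sqrt (deg e i)%:R.
Definition W : 'M[C]_(Q, n) := \matrix_(l, i) ((i \in S l)%:R * toC (sq i)).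
Local Notation LC := (map_mx toC (norm_laplacian R e)).
Definition lam : R := (g.-1)%:R^-1.

Hypothesis esymm : symmetric e.
Hypothesis eirr : irreflexive e.
Hypothesis noiso : no_isolated e.
Hypothesis g2 : (2 <= g)%N.
Hypothesis dang : forall l, dangling e g (S l).
Hypothesis disj : forall l l' : 'I_Q, l != l' -> [disjoint S l & S l'].

Lemma card_pairset (P : 'I_n -> 'I_n -> bool) :
  #|[set p : 'I_n * 'I_n | P p.1 p.2]| = (\sum_i \sum_j (P i j : nat))%N.
Proof.
rewrite -sum1_card big_mkcond /= (pair_big xpredT xpredT (fun i j => (P i j : nat))) /=.
by apply: eq_bigr => p _; rewrite inE; case: (P _ _).
Qed.

Lemma deg_sum i : deg e i = (\sum_j (e i j : nat))%N.
Proof.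
rewrite /deg -sum1_card big_mkcond /=.
by apply: eq_bigr => j _; rewrite inE; case: (e _ _).
Qed.

Lemma vol_dang l : vol e (S l) = (2 * g.-1).+1%N.
Proof.
have [Hc Hie _ Hb] := dang l.
set T := S l.
rewrite /vol.
have -> : (\sum_(i in T) deg e i = \sum_i \sum_j
   (((i \in T) && (j \in T) && (i < j)%N && e i j) : nat) +
   \sum_i \sum_j (((i \in T) && (j \in T) && (j < i)%N && e i j) : nat) +
   \sum_i \sum_j (((i \in T) && (j \notin T) && e i j) : nat))%N.
  rewrite -!big_split big_mkcond /=; apply: eq_bigr => i _.
  rewrite deg_sum -!big_split /=; case: (boolP (i \in T)) => iT; last first.
    by rewrite big1.
  apply: eq_bigr => j _ /=.
  case: (boolP (j \in T)) => jT /=; last by rewrite !add0n.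
  have [ij|ij|ij] := ltngtP i j; rewrite /= ?addn0 ?add0n //.
  by rewrite (val_inj ij) eirr.
have E1 : (\sum_i \sum_j (((i \in T) && (j \in T) && (i < j)%N && e i j) : nat))%N
    = induced_edges e T.
  rewrite /induced_edges (card_pairset (fun i j => [&& i \in T, j \in T, (i < j)%N & e i j])).
  by apply: eq_bigr => i _; apply: eq_bigr => j _; rewrite !andbA.
have E2 : (\sum_i \sum_j (((i \in T) && (j \in T) && (j < i)%N && e i j) : nat))%N
    = induced_edges e T.
  rewrite -E1 exchange_big /=.
  by apply: eq_bigr => i _; apply: eq_bigr => j _; rewrite esymm [(j \in T) && _]andbC.
have E3 : (\sum_i \sum_j (((i \in T) && (j \notin T) && e i j) : nat))%N
    = boundary_edges e T.
  rewrite /boundary_edges (card_pairset (fun i j => [&& i \in T, j \notin T & e i j])).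
  by apply: eq_bigr => i _; apply: eq_bigr => j _; rewrite !andbA.
rewrite E1 E2 E3 Hie Hb; lia.
Qed.

Lemma memS_uniq i l m : i \in S l -> i \in S m -> l = m.
Proof.
move=> il im; apply/eqP; apply: contraT => lm.
by have := disjointFr (disj _ _ lm) il; rewrite im.
Qed.
Arguments memS_uniq {i l m}.

Definition Bd l (p : 'I_n * 'I_n) : bool :=
  [&& p.1 \in S l, p.2 \notin S l, e p.1 p.2 &
      [forall i, forall j, ((i \in S l) && (j \notin S l) && e i j) ==> ((i, j) == p)]].

Lemma Bd_ex l : exists p, Bd l p.
Proof.
have [_ _ _ Hb] := dang l.
move: Hb; rewrite /boundary_edges => /eqP /cards1P [p Hp].
have : p \in [set p : 'I_n * 'I_n | [&& p.1 \in S l, p.2 \notin S l & e p.1 p.2]].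
  by rewrite Hp set11.
rewrite inE => /and3P [H1 H2 H3].
exists p; rewrite /Bd H1 H2 H3 /=.
apply/forallP => i; apply/forallP => j; apply/implyP => /andP [/andP [Hi Hj] Hij].
have : (i, j) \in [set p : 'I_n * 'I_n | [&& p.1 \in S l, p.2 \notin S l & e p.1 p.2]].
  by rewrite inE /= Hi Hj Hij.
by rewrite Hp inE.
Qed.

Definition bp l := xchoose (Bd_ex l).
Definition r l := (bp l).1.
Definition u l := (bp l).2.

Lemma bpP l : [/\ r l \in S l, u l \notin S l, e (r l) (u l) &
  forall i j, i \in S l -> j \notin S l -> e i j -> i = r l /\ j = u l].
Proof.
have := xchooseP (Bd_ex l); rewrite -/(bp l) /Bd => /and4P [H1 H2 H3 /forallP H4].
split => // i j Hi Hj Hij.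
  move: (H4 i) => /forallP /(_ j); rewrite Hi Hj Hij /= => /eqP E.
by rewrite /r /u -E.
Qed.

Lemma u_inj l l' m : u l \in S m -> u l' \in S m -> l = l'.
Proof.
have key : forall l, u l \in S m -> r l = u m.
  move=> k ukm.
  have [rk uk erk _] := bpP k.
  have km : k != m by apply: contraNneq uk => km; move: ukm; rewrite -km.
  have rkm : r k \notin S m by rewrite (disjointFr (disj _ _ km) rk).
  have [_ _ _ Hm] := bpP m.
  have [] := Hm _ _ ukm rkm; first by rewrite esymm.
  by [].
move=> H1 H2.
have E := key _ H1; rewrite -(key _ H2) in E.
have [r1 _ _ _] := bpP l; have [r2 _ _ _] := bpP l'.
by apply: (@memS_uniq (r l) l l' r1); rewrite E.
Qed.

Local Open Scope sesquilinear_scope.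
Local Open Scope ring_scope.

Definition sC i : C := toC (sq i).
Definition f (a : 'rV[C]_Q) i : C := \sum_l a 0 l * (i \in S l)%:R.

Lemma sC_real i : (sC i)^* = sC i.
Proof. by apply/CrealP; apply/complex_realP; exists (sq i). Qed.

Lemma deg_gt0 i : (0 < deg e i)%N.
Proof.
have [j eij] := noiso i.
by rewrite /deg card_gt0; apply/set0Pn; exists j; rewrite inE.
Qed.

Lemma sC_sq i : sC i * sC i = (deg e i)%:R.
Proof.
by rewrite /sC -rmorphM -expr2 sqr_sqrtr ?ler0n // rmorph_nat.
Qed.

Lemma sC_neq0 i : sC i != 0.
Proof.
apply: contraTneq (deg_gt0 i) => H.
have := sC_sq i; rewrite H mul0r => /esym/eqP; rewrite pnatr_eq0 => /eqP ->.
by [].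
Qed.

Lemma deg_sumC i : (deg e i)%:R = \sum_j (e i j)%:R :> C.
Proof. by rewrite deg_sum natr_sum. Qed.

Lemma f_in a i l : i \in S l -> f a i = a 0 l.
Proof.
move=> il; rewrite /f (bigD1 l) //= il mulr1 big1 ?addr0 // => m ml.
case: (boolP (i \in S m)) => im; last by rewrite mulr0.
by move/eqP: ml; rewrite (memS_uniq il im).
Qed.

Arguments f_in a {i l}.

Lemma f_out a i : (forall l, i \notin S l) -> f a i = 0.
Proof. by move=> H; rewrite /f big1 // => l _; rewrite (negPf (H l)) mulr0. Qed.

Lemma v_entry a i : (a *m W) 0 i = f a i * sC i.
Proof.
by rewrite mxE /f mulr_suml; apply: eq_bigr => l _; rewrite mxE mulrA.
Qed.

Lemma exch a (K : 'I_n -> C) :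
  \sum_i f a i * K i = \sum_l a 0 l * \sum_(i in S l) K i.
Proof.
rewrite /f; under eq_bigr do rewrite mulr_suml.
rewrite exchange_big /=; apply: eq_bigr => l _.
rewrite mulr_sumr [RHS]big_mkcond /=; apply: eq_bigr => i _.
by case: (i \in S l); rewrite ?mulr1 ?mulr0 ?mul0r.
Qed.

Lemma ct_entry (M : 'rV[C]_n) i : (M ^t*) i 0 = (M 0 i)^*.
Proof. by rewrite !mxE. Qed.

Definition A2 (a : 'rV[C]_Q) := \sum_l a 0 l * (a 0 l)^*.

Lemma G1 a : ((a *m W) *m (a *m W)^t*) 0 0 = ((2 * g.-1).+1)%:R * A2 a.
Proof.
rewrite mxE.
transitivity (\sum_i f a i * ((f a i)^* * (deg e i)%:R)).
  apply: eq_bigr => i _; rewrite ct_entry v_entry rmorphM /= sC_real -sC_sq.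
  by ring.
rewrite exch /A2 mulr_sumr; apply: eq_bigr => l _.
rewrite (eq_bigr (fun i => (a 0 l)^* * (deg e i)%:R)); last first.
  by move=> i il; rewrite (f_in a il).
rewrite -mulr_sumr -natr_sum -/(vol e (S l)) vol_dang; ring.
Qed.

Lemma Lentry i j : norm_laplacian R e i j =
  (i == j)%:R - (sq i)^-1 * (e i j)%:R * (sq j)^-1.
Proof.
rewrite /norm_laplacian /deg_inv_sqrt /adjacency mul_diag_mx mul_mx_diag !mxE.
by [].
Qed.

Lemma LCentry i j : LC i j = (i == j)%:R - (sC i)^-1 * (e i j)%:R * (sC j)^-1.
Proof.
by rewrite mxE Lentry rmorphB /= !rmorphM /= !fmorphV /= !rmorph_nat.
Qed.

Lemma quad a : ((a *m W) *m LC *m (a *m W)^t*) 0 0 =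
  \sum_i f a i * \sum_j (e i j)%:R * ((f a i)^* - (f a j)^*).
Proof.
rewrite mxE.
transitivity (\sum_j \sum_i ((a *m W) 0 i * LC i j) * ((a *m W) 0 j)^*).
  by apply: eq_bigr => j _; rewrite ct_entry mxE mulr_suml.
rewrite exchange_big /=; apply: eq_bigr => i _.
transitivity (\sum_j ((i == j)%:R * (f a i * (f a i)^* * (deg e i)%:R)
                     - (e i j)%:R * (f a i * (f a j)^*))).
  apply: eq_bigr => j _; rewrite !v_entry LCentry rmorphM /= sC_real.
  have si := sC_neq0 i; have sj := sC_neq0 j.
  case: (eqVneq i j) => [<-|ij].
    by rewrite eirr -sC_sq; field.
  rewrite /= !mulr0n; field.
  by rewrite si sj.
rewrite sumrB.
have -> : f a i * \sum_j (e i j)%:R * ((f a i)^* - (f a j)^*) =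
  \sum_j (e i j)%:R * (f a i * (f a i)^*) - \sum_j (e i j)%:R * (f a i * (f a j)^*).
  by rewrite -sumrB mulr_sumr; apply: eq_bigr => j _; ring.
congr (_ - _).
rewrite (bigD1 i) //= eqxx big1 ?addr0; last first.
  by move=> j /negPf; rewrite eq_sym => ->; rewrite mul0r.
by rewrite deg_sumC mul1r mulr_sumr; apply: eq_bigr => j _; rewrite mulrC.
Qed.

Definition Xs (a : 'rV[C]_Q) := \sum_l a 0 l * (f a (u l))^*.

Lemma G2 a : ((a *m W) *m LC *m (a *m W)^t*) 0 0 = A2 a - Xs a.
Proof.
rewrite quad exch /A2 /Xs -sumrB; apply: eq_bigr => l _.
rewrite -mulrBr; congr (_ * _).
have [rl ul erl uniq] := bpP l.
transitivity (\sum_(i in S l) \sum_j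
   ((i == r l) && (j == u l))%:R * ((a 0 l)^* - (f a (u l))^*)).
  apply: eq_bigr => i il; rewrite (f_in a il); apply: eq_bigr => j _.
  case: (boolP (j \in S l)) => jl.
    have -> : (j == u l) = false by apply: contraNF ul => /eqP <-.
    by rewrite (f_in a jl) subrr mulr0 andbF mul0r.
  case: (boolP (e i j)) => eij.
    by have [-> ->] := uniq _ _ il jl eij; rewrite !eqxx.
  case: (boolP ((i == r l) && (j == u l))) => [/andP [/eqP ir /eqP ju]|_].
    by move: eij; rewrite ir ju erl.
  by rewrite /= !mulr0n !mul0r.
rewrite (bigD1 (r l) rl) /= [X in _ + X]big1 ?addr0; last first.
  by move=> i /andP [_ /negPf ->]; rewrite big1 // => j _; rewrite mul0r.
rewrite (bigD1 (u l)) //= !eqxx mul1r big1 ?addr0 //.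
by move=> j /negPf ->; rewrite mul0r.
Qed.

Lemma A2E a : A2 a = \sum_l `|a 0 l| ^+ 2.
Proof. by apply: eq_bigr => l _; rewrite normCK. Qed.

Lemma A2_gt0 a : a != 0 -> 0 < A2 a.
Proof.
move=> an0.
have [l al] : exists l, a 0 l != 0.
  apply/existsP; apply: contraR an0 => /existsPn H; apply/eqP/rowP => l.
  by move: (H l) => /negPn /eqP ->; rewrite mxE.
rewrite /A2 (bigD1 l) //= ltr_wpDr ?sumr_ge0 // => [m _|].
  exact: mul_conjC_ge0.
by rewrite mul_conjC_gt0.
Qed.

Lemma normf_sq a i : `|f a i| ^+ 2 = \sum_m (i \in S m)%:R * `|a 0 m| ^+ 2.
Proof.
case: (boolP [exists m, i \in S m]) => [/existsP [m im]|/existsPn H].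
  rewrite (f_in a im) (bigD1 m) //= im mul1r big1 ?addr0 // => k km.
  case: (boolP (i \in S k)) => ik; last by rewrite mul0r.
  by move/eqP: km; rewrite (memS_uniq im ik).
rewrite f_out // normr0 expr0n /= big1 // => m _.
by rewrite (negPf (H m)) mul0r.
Qed.

Lemma sum_fu a : \sum_l `|f a (u l)| ^+ 2 <= A2 a.
Proof.
rewrite A2E; under eq_bigr do rewrite normf_sq.
rewrite exchange_big /=; apply: ler_sum => m _.
case: (boolP [exists l, u l \in S m]) => [/existsP [l0 ul0]|/existsPn H].
  rewrite (bigD1 l0) //= ul0 mul1r big1 ?addr0 // => k kl.
  case: (boolP (u k \in S m)) => uk; last by rewrite mul0r.
  by move/eqP: kl; rewrite (u_inj _ _ _ uk ul0).
rewrite big1 ?exprn_ge0 ?normr_ge0 // => l _; by rewrite (negPf (H l)) mul0r.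
Qed.

Lemma amgm (x y : C) : 0 <= x -> 0 <= y -> 2%:R * (x * y) <= x ^+ 2 + y ^+ 2.
Proof.
move=> x0 y0.
have xr := ger0_real x0; have yr := ger0_real y0.
have : 0 <= (x - y) ^+ 2.
  by rewrite -real_normK ?exprn_ge0 ?normr_ge0 // rpredB.
by rewrite sqrrB addrAC subr_ge0 mulr_natl.
Qed.

Lemma G3 a : `|Xs a| <= A2 a.
Proof.
have H1 : `|Xs a| <= \sum_l `|a 0 l| * `|f a (u l)|.
  apply: le_trans (ler_norm_sum _ _ _) _; apply: ler_sum => l _.
  by rewrite normrM norm_conjC.
have H2 : 2%:R * \sum_l `|a 0 l| * `|f a (u l)| <= A2 a + A2 a.
  rewrite mulr_sumr {1}A2E.
  apply: le_trans (lerD (lexx _) (sum_fu a)); rewrite -big_split /=.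
  by apply: ler_sum => l _; apply: amgm.
have H3 : 2%:R * `|Xs a| <= 2%:R * A2 a.
  apply: le_trans (le_trans _ H2) _.
    by rewrite ler_pM2l ?ltr0n.
  by rewrite mulr_natl mulr2n.
by rewrite ler_pM2l ?ltr0n in H3.
Qed.

Lemma graph_bound (a : 'rV[C]_Q) : a != 0 -> exists A2 X : C, [/\ 0 < A2, `|X| <= A2,
 ((a *m W) *m (a *m W)^t*) 0 0 = ((2 * g.-1).+1)%:R * A2 &
 ((a *m W) *m LC *m (a *m W)^t*) 0 0 = A2 - X].
Proof.
move=> an0; exists (A2 a), (Xs a); split.
- exact: A2_gt0.
- exact: G3.
- exact: G1.
- exact: G2.
Qed.

Lemma numeric (A2 X : C) : 0 < A2 -> `|X| <= A2 ->
  toC lam * (((2 * g.-1).+1)%:R * A2) <= A2 - X -> False.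
Proof.
move=> A2p HX H.
have lam0 : 0 <= toC lam by rewrite ler0c /lam invr_ge0 ler0n.
have T0 : 0 <= A2 - X by apply: le_trans H; rewrite mulr_ge0 // mulr_ge0 // ltW.
have : A2 - X <= A2 + A2.
  rewrite -(ger0_norm T0); apply: (le_trans (ler_normB _ _)).
  by rewrite (gtr0_norm A2p) lerD2l.
move=> /(le_trans H); rewrite mulrA -mulr2n -[A2 *+ 2]mulr_natl.
rewrite ler_pM2r // -(rmorph_nat toC) -rmorphM -(rmorph_nat toC 2) lecR.
rewrite /lam; case: g g2 => [|[|m]] // _ /=.
rewrite ler_pdivrMl ?ltr0n // -!natrM ler_nat; lia.
Qed.
Lemma count_bound (P : 'M[C]_n) (d : 'rV[C]_n) :
  P \is unitarymx -> d \is a mxOver Num.real -> LC = invmx P *m diag_mx d *m P ->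
  (Q <= #|[set i : 'I_n | (complex.Re (d 0 i) < lam)%R]|)%N.
Proof.
move=> Pu dr LCe.
set A := [set i : 'I_n | (complex.Re (d 0 i) < lam)%R].
rewrite leqNgt; apply/negP => kQ.
pose E : 'M[C]_(n, #|A|) := \matrix_(i, j) (i == enum_val j)%:R.
pose M' := W *m P^t* *m E.
have Kn0 : kermx M' != 0.
  rewrite -mxrank_eq0 mxrank_ker subn_eq0 -ltnNge.
  exact: leq_ltn_trans (rank_leq_col M') kQ.
have /existsP [i0 /existsP [j0 Hij]] : [exists i, exists j, kermx M' i j != 0].
  apply: contraR Kn0 => /existsPn H; apply/eqP; apply/matrixP => i j.
  by move: (H i) => /existsPn /(_ j) /negPn /eqP ->; rewrite mxE.
set a := row i0 (kermx M').
have an0 : a != 0.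
  by apply: contraNneq Hij => /matrixP /(_ 0 j0); rewrite !mxE => ->.
have aM : a *m M' = 0 by apply/sub_kermxP; exact: row_sub.
have [A2 [X [A2p HX HVV HVL]]] := @graph_bound a an0.
set v := a *m W in HVV HVL.
set w := v *m P^t*.
have PPt : P *m P^t* = 1%:M by apply/unitarymxP.
have PtP : P^t* *m P = 1%:M by rewrite -invmx_unitary // mulVmx // unitarymx_unit.
have vw : v = w *m P by rewrite /w -mulmxA PtP mulmx1.
have vt : v^t* = P^t* *m w^t*.
  by rewrite vw trmx_mul map_mxM.
have wA : forall i, i \in A -> w 0 i = 0.
  move=> i iA.
  have := congr1 (fun M : 'M[C]_(1, #|A|) => M 0 (enum_rank_in iA i)) aM.
  rewrite /M' !mulmxA -/v -/w mxE (bigD1 i) //= big1 ?addr0.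
    by rewrite /E !mxE enum_rankK_in // eqxx mulr1.
  by move=> k /negPf kn; rewrite /E !mxE enum_rankK_in // kn mulr0.
have HVV' : (v *m v^t*) 0 0 = \sum_i w 0 i * (w 0 i)^*.
  have -> : v *m v^t* = w *m w^t*.
    by rewrite {1}vw vt -mulmxA (mulmxA P) PPt mul1mx.
  by rewrite mxE; apply: eq_bigr => i _; rewrite !mxE.
have HVL' : (v *m LC *m v^t*) 0 0 = \sum_i w 0 i * d 0 i * (w 0 i)^*.
  have -> : v *m LC *m v^t* = w *m diag_mx d *m w^t*.
    rewrite vt {1}vw LCe invmx_unitary // !mulmxA -(mulmxA w) PPt mulmx1.
    by rewrite -(mulmxA _ P) PPt mulmx1.
  by rewrite mul_mx_diag mxE; apply: eq_bigr => i _; rewrite !mxE.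
apply: (@numeric A2 X A2p HX).
rewrite -HVV -HVL HVV' HVL' mulr_sumr; apply: ler_sum => i _.
case: (boolP (i \in A)) => iA.
  by rewrite wA // !mul0r mulr0.
have dre : d 0 i = toC (complex.Re (d 0 i)).
  by rewrite RRe_real //; move/mxOverP: dr; apply.
rewrite (_ : w 0 i * d 0 i * (w 0 i)^* = d 0 i * (w 0 i * (w 0 i)^*)); last by rewrite mulrAC mulrC.
rewrite ler_wpM2r ?mul_conjC_ge0 //.
by rewrite dre lecR leNgt; move: iA; rewrite inE.
Qed.

Lemma LC_herm : LC \is hermsymmx.
Proof.
apply: realsym_hermsym.
  apply/is_hermitianmxP; rewrite expr0 scale1r.
  have Ls i j : norm_laplacian R e i j = norm_laplacian R e j i.
    rewrite !Lentry (eq_sym i j) (esymm i j); ring.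
  apply/matrixP => i j; rewrite [LHS]mxE [RHS]mxE /= [RHS]mxE [RHS]mxE Ls.
  by [].
apply/mxOverP => i j; rewrite mxE; apply/complex_realP; by eexists.
Qed.

Lemma final : exists s : seq R,
    char_poly (norm_laplacian R e) = \prod_(x <- s) ('X - x%:P) /\
    (Q <= 2 * count (fun x : R => (x < (g.-1)%:R^-1)%R) s)%N.
Proof.
have Hh := LC_herm.
have /orthomx_spectralP LCe := hermitian_normalmx Hh.
have dr := hermitian_spectral_diag_real Hh.
set P := spectralmx LC in LCe; set d := spectral_diag LC in LCe dr.
exists [seq complex.Re (d 0 i) | i <- enum 'I_n]; split.
  apply: (@map_poly_inj _ _ toC).
  rewrite map_char_poly LCe char_poly_conj ?spectral_unit //.
  rewrite char_poly_trig ?diag_mx_is_trig // rmorph_prod big_map big_enum /=.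
  apply: eq_bigr => i _; rewrite rmorphB /= map_polyX map_polyC /= RRe_real.
    by rewrite mxE eqxx mulr1n.
  by move/mxOverP: dr; apply.
rewrite count_map count_enum_card.
have := @count_bound P d (spectral_unitarymx LC) dr LCe.
move=> H; set k := #|preim _ _|.
have E : #|[set i | (complex.Re (d 0 i) < lam)%R]| = k.
  by apply: eq_card => i; rewrite !inE.
rewrite E in H; lia.
Qed.
End Main.

Theorem theorem3p5 (R : rcfType) (n : nat) (e : rel 'I_n) (g Q : nat)
    (S : 'I_Q -> {set 'I_n}) :
  simple_graph e -> no_isolated e -> (2 <= g)%N -> (1 <= Q)%N ->
  (forall l : 'I_Q, dangling e g (S l)) ->
  (forall l l' : 'I_Q, l != l' -> [disjoint S l & S l']) ->
  (4 * g ^ 2 <= vol e (~: \bigcup_(l < Q) S l))%N ->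
  exists s : seq R,
    char_poly (norm_laplacian R e) = \prod_(x <- s) ('X - x%:P) /\
    (Q <= 2 * count (fun x : R => (x < (g.-1)%:R^-1)%R) s)%N.
Proof.
move=> [es ei] ni g2 _ dg dj _.
by apply: final.
Qed.
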